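(* Let $\lambda<0$ and let $p(x;\theta)=(1+\lambda\,\theta\cdot F(x))_+^{1/\lambda}e^{-\varphi(\theta)}$, $\theta\in\Theta\subset\mathbb{R}^d$, be a $\lambda$-exponential family satisfying the standing assumptions described in the context. Let $x_1,\ldots,x_n\in\mathcal{S}$ be data points, $y_i=F(x_i)$, and let $$\ell(\theta)=\sum_{i=1}^n\Big(\tfrac{1}{\lambda}\log(1+\lambda\,\theta\cdot y_i)-\varphi(\theta)\Big)$$ be the log-likelihood. Given $\theta(0)\in\Theta$, define the fixed-point iteration, for $k\ge 0$, $$\eta(k+1):=\sum_{i=1}^n w_i(\theta(k))\,y_i,\qquad \theta(k+1):=\nabla^{(\lambda)}\psi(\eta(k+1)),$$ where $w_i(\theta):=\dfrac{1/(1+\lambda\,\theta\cdot y_i)}{\sum_{j=1}^n 1/(1+\lambda\,\theta\cdot y_j)}$, and set $\eta(0)=\nabla^{(\lambda)}\varphi(\theta(0))$. Then for every $k\ge0$, $\ell(\theta(k+1))>\ell(\theta(k))$ unless $\theta(k)$ already satisfies the fixed-point condition $\nabla^{(\lambda)}\varphi(\theta(k))=\sum_{i=1}^n w_i(\theta(k))\,y_i$.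
   Context: Setting: $\mathcal{X}$ is a state space with reference measure $\nu$, $F=(F_1,\ldots,F_d):\mathcal{X}\to\mathbb{R}^d$ is a vector of statistics, $z_+=\max\{z,0\}$, and $\varphi(\theta)$ is defined by the normalization $\int_{\mathcal{X}}p(x;\theta)\,d\nu(x)=1$. The $\lambda$-gradient of a differentiable function $f$ is $\nabla^{(\lambda)}f(\theta):=\nabla f(\theta)/(1-\lambda\nabla f(\theta)\cdot\theta)$. Standing assumptions: $\lambda<0$; $\Theta=\{\theta\in\mathbb{R}^d:\int(1+\lambda\theta\cdot F(x))_+^{1/\lambda}d\nu(x)<\infty\}$ is the natural parameter set; the family satisfies the regularity condition of Wong and Zhang (2022, Condition III.10), under which $\varphi$ is differentiable on $\Theta$ with $1-\lambda\nabla\varphi(\theta)\cdot\theta>0$, the dual potential $\psi(\eta):=\sup_{\theta'\in\Theta}\{\frac1\lambda\log(1+\lambda\theta'\cdot\eta)-\varphi(\theta')\}$ (the $\lambda$-conjugate of $\varphi$) is such that $\frac1\lambda(e^{\lambda\psi}-1)$ is strictly convex on $\Xi$, and $\nabla^{(\lambda)}\varphi:\Theta\to\Xi$ is a diffeomorphism with inverse $\nabla^{(\lambda)}\psi$; moreover the dual parameter set $\Xi:=\nabla^{(\lambda)}\varphi(\Theta)$ is convex and contains the common support $\mathcal{S}:=\{x\in\mathcal{X}:p(x;\theta)>0\}$ of the family (so the iterates are well defined, with $\eta(k)\in\Xi$, $\theta(k)\in\Theta$). *)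

(* Defs.v *)
From HB Require Import structures.
From mathcomp Require Import all_boot all_order all_algebra.
From mathcomp Require Import all_classical all_reals all_analysis.
Set Implicit Arguments. Unset Strict Implicit. Unset Printing Implicit Defensive.
Import Order.TTheory GRing.Theory Num.Theory.
Import numFieldNormedType.Exports.
Local Open Scope classical_set_scope.
Local Open Scope ring_scope.

Section LambdaExp.
Variable R : realType.
Variable d : nat.
Local Notation V := 'rV[R]_d.

Definition vdot (u v : V) : R := \sum_(i < d) u ord0 i * v ord0 i.

Definition grad (f : V -> R) (t : V) : V :=
  \row_(i < d) 'D_(delta_mx ord0 i : V) f t.

Definition lgrad (lam : R) (f : V -> R) (t : V) : V :=
  (1 - lam * vdot (grad f t) t)^-1 *: grad f t.

(* z_+ ^ (1/lambda), with 0 ^ (1/lambda) = 0 (powR convention) *)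
Definition lam_kernel (lam : R) (t y : V) : R :=
  powR (Num.max (1 + lam * vdot t y) 0) lam^-1.

Section Measure.
Context {dX : measure_display} {X : measurableType dX}.
Variable nu : {measure set X -> \bar R}.
Variable F : X -> V.
Variable lam : R.

Definition Theta : set V :=
  [set t | (\int[nu]_x (lam_kernel lam t (F x))%:E < +oo)%E].

Definition phi (t : V) : R := ln (fine (\int[nu]_x (lam_kernel lam t (F x))%:E)).

Definition pdens (x : X) (t : V) : R := lam_kernel lam t (F x) * expR (- phi t).

Definition psi_set (e : V) : set R :=
  [set lam^-1 * ln (1 + lam * vdot t' e) - phi t' |
     t' in [set t' | Theta t' /\ 0 < 1 + lam * vdot t' e]].

Definition psi (e : V) : R := sup (psi_set e).

Definition Xi : set V := lgrad lam phi @` Theta.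

Definition Supp : set X := [set x | exists2 t, Theta t & 0 < pdens x t].

Definition loglik n (y : 'I_n -> V) (t : V) : R :=
  \sum_(i < n) (lam^-1 * ln (1 + lam * vdot t (y i)) - phi t).

Definition weight n (y : 'I_n -> V) (t : V) (i : 'I_n) : R :=
  (1 + lam * vdot t (y i))^-1 / \sum_(j < n) (1 + lam * vdot t (y j))^-1.

End Measure.

Definition convex_set_on (A : set V) : Prop :=
  forall a b, A a -> A b -> forall s : R, 0 <= s <= 1 ->
    A (s *: a + (1 - s) *: b).

Definition strictly_convex_on (A : set V) (g : V -> R) : Prop :=
  forall a b, A a -> A b -> a != b -> forall s : R, 0 < s < 1 ->
    g (s *: a + (1 - s) *: b) < s * g a + (1 - s) * g b.

End LambdaExp.

(* Main.v *)
Require Import Defs.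
From HB Require Import structures.
From mathcomp Require Import all_boot all_order all_algebra.
From mathcomp Require Import all_classical all_reals all_analysis.
From mathcomp Require Import ring lra.
Import Order.TTheory GRing.Theory Num.Theory.
Import numFieldNormedType.Exports.
Local Open Scope classical_set_scope.
Local Open Scope ring_scope.

Section Calc.
Context {R : realType} {d : nat}.
Local Notation V := 'rV[R]_d.

Lemma vdotC (u v : V) : vdot u v = vdot v u.
Proof. by rewrite /vdot; apply: eq_bigr => i _; rewrite mulrC. Qed.

Lemma vdotZl k (u v : V) : vdot (k *: u) v = k * vdot u v.
Proof. by rewrite /vdot mulr_sumr; apply: eq_bigr => i _; rewrite mxE mulrA. Qed.

Lemma vdotZr k (u v : V) : vdot u (k *: v) = k * vdot u v.
Proof. by rewrite vdotC vdotZl vdotC. Qed.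

Lemma vdotDr (u v w : V) : vdot u (v + w) = vdot u v + vdot u w.
Proof. by rewrite /vdot -big_split; apply: eq_bigr => i _; rewrite mxE mulrDr. Qed.

Lemma vdotDl (u v w : V) : vdot (v + w) u = vdot v u + vdot w u.
Proof. by rewrite vdotC vdotDr !(vdotC u). Qed.

Lemma vdotBr (u v w : V) : vdot u (v - w) = vdot u v - vdot u w.
Proof.
rewrite /vdot -sumrB; apply: eq_bigr => i _; rewrite !mxE mulrBr //.
Qed.

Lemma vdot0r (u : V) : vdot u 0 = 0.
Proof. by rewrite /vdot big1 // => i _; rewrite mxE mulr0. Qed.

Lemma vdot_sumr n (u : V) (w : 'I_n -> R) (y : 'I_n -> V) :
  vdot u (\sum_(i < n) w i *: y i) = \sum_(i < n) w i * vdot u (y i).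
Proof.
rewrite /vdot.
under eq_bigr do rewrite summxE mulr_sumr.
rewrite exchange_big /=; apply: eq_bigr => i _.
rewrite mulr_sumr; apply: eq_bigr => j _; rewrite mxE.
by rewrite mulrCA.
Qed.

Lemma diff_grad (f : V -> R) x w : differentiable f x ->
  'd f x w = vdot (grad f x) w.
Proof.
move=> df.
rewrite {1}(row_sum_delta w) linear_sum /vdot; apply: eq_bigr => j _.
rewrite linearZ /= -deriveE // /grad mxE mulrC //.
Qed.

Lemma is_derive_comp_grad (f : V -> R) (p : R -> V) s :
  differentiable p s -> differentiable f (p s) ->
  is_derive s 1 (f \o p) (vdot (grad f (p s)) ('D_1 p s)).
Proof.
move=> dp df.
have dfp : differentiable (f \o p) s by exact: differentiable_comp.
apply: is_derive_eq; first exact/derivableP/diff_derivable.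
rewrite deriveE // diff_comp // /= diff_grad // -deriveE //.
Qed.

Lemma is_derive_coord (k : 'I_d) (p : R -> V) s :
  differentiable p s ->
  is_derive s 1 (fun t => p t ord0 k) (('D_1 p s) ord0 k).
Proof.
move=> dp.
have dv : derivable p s 1 by exact: diff_derivable.
rewrite derive_mx // mxE.
apply: derivableP.
by move/derivable_mxP : dv => /(_ ord0 k).
Qed.

Lemma is_derive_vdot (p q : R -> V) s :
  differentiable p s -> differentiable q s ->
  is_derive s 1 (fun t => vdot (p t) (q t))
    (vdot ('D_1 p s) (q s) + vdot (p s) ('D_1 q s)).
Proof.
move=> dp dq.
have -> : (fun t => vdot (p t) (q t)) =
   \sum_(k < d) (fun t => p t ord0 k * q t ord0 k).
  by apply: funext => t; rewrite /vdot fct_sumE.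
apply: is_derive_eq.
  apply: is_derive_sum => k.
  have H := is_deriveM (is_derive_coord k p s dp) (is_derive_coord k q s dq).
  exact: H.
rewrite /vdot -big_split /=; apply: eq_bigr => k _.
by rewrite /GRing.scale /= addrC mulrC [X in _ + X]mulrC.
Qed.


Lemma is_derive_line (a v : V) (s : R) : is_derive s 1 (fun t : R => a + t *: v) v.
Proof.
have h1 : is_derive s 1 (fun t : R => t *: v) v.
  have I := @is_diff_scalel R V s v.
  have dl : differentiable (fun t : R => t *: v) s by exact: (ex_diff (is_diff_def:=I)).
  apply: DeriveDef; first exact: diff_derivable.
  rewrite deriveE // (diff_val (is_diff_def:=I)) /=.
  by rewrite scale1r.
have h2 := is_deriveD (is_derive_cst a s 1) h1.
rewrite add0r in h2.
have -> : (fun t : R => a + t *: v) = cst a + (fun t : R => t *: v) by apply: funext.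
exact: h2.
Qed.

Lemma differentiable_line (a v : V) (s : R) : differentiable (fun t : R => a + t *: v) s.
Proof. exact/derivable1_diffP/(@ex_derive _ _ _ _ _ _ _ (is_derive_line a v s)). Qed.

Lemma derive_line (a v : V) (s : R) : 'D_1 (fun t : R => a + t *: v) s = v.
Proof. exact: (@derive_val _ _ _ _ _ _ _ (is_derive_line a v s)). Qed.

End Calc.
Arguments is_derive_comp_grad {R d f p s}.
Arguments is_derive_vdot {R d p q s}.

Section Main.
Context (R : realType) (d : nat) (dX : measure_display) (X : measurableType dX)
  (nu : {measure set X -> \bar R}) (F : X -> 'rV[R]_d) (lam : R).
Local Notation V := 'rV[R]_d.
Local Notation P := (phi nu F lam).
Local Notation S := (psi nu F lam).
Local Notation T := (lgrad lam (psi nu F lam)).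
Local Notation G := (lgrad lam (phi nu F lam)).
Local Notation Th := (Theta nu F lam).
Local Notation XI := (Xi nu F lam).

Hypothesis Hlam : lam < 0.
Hypothesis Hphi_diff : forall t, Th t -> differentiable P t.
Hypothesis Hphi_den : forall t, Th t -> 0 < 1 - lam * vdot (grad P t) t.
Hypothesis Hpsi_fin : forall e, XI e -> has_ubound (psi_set nu F lam e)
                                      /\ psi_set nu F lam e !=set0.
Hypothesis Hpsi_diff : forall e, XI e -> differentiable S e.
Hypothesis Hpsi_sconv : strictly_convex_on XI
     (fun e => lam^-1 * (expR (lam * S e) - 1)).
Hypothesis Hinv : forall t, Th t -> T (G t) = t.
Hypothesis Hdiffeo2 : forall e, XI e -> differentiable T e.
Hypothesis HXi_conv : convex_set_on XI.

Definition L (t e : V) := 1 + lam * vdot t e.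

Lemma lam_neq0 : lam != 0. Proof. by rewrite lt_eqF. Qed.

Lemma GT {t} : Th t -> XI (G t) /\ T (G t) = t.
Proof. by move=> ht; split; [exists t | exact: Hinv _ ht]. Qed.

Lemma TG {e} : XI e -> Th (T e) /\ G (T e) = e.
Proof. by case=> t ht <-; rewrite (Hinv _ ht). Qed.

Lemma F3 {t} : Th t -> 0 < L t (G t) /\ grad P t = (L t (G t))^-1 *: G t.
Proof.
move=> ht; have hD := Hphi_den _ ht.
set D := 1 - lam * vdot (grad P t) t in hD *.
have hL : L t (G t) = D^-1.
  rewrite /L /lgrad -/D vdotZr vdotC.
  apply: (@mulfI _ D); first by rewrite gt_eqF.
  rewrite mulrDr mulr1 divff ?gt_eqF // /D; field; rewrite gt_eqF //.
rewrite hL invrK; split; first by rewrite invr_gt0.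
by rewrite /lgrad -/D scalerA divff ?gt_eqF // scale1r.
Qed.

Lemma LTpos {e} : XI e -> 0 < L (T e) e.
Proof. by move=> he; have [ht hg] := TG he; have := (F3 ht).1; rewrite hg. Qed.

Lemma sup_bound {e t} : XI e -> Th t -> 0 < L t e ->
  lam^-1 * ln (L t e) - P t <= S e.
Proof.
move=> he ht hL; have [ub ne] := Hpsi_fin _ he.
apply: sup_upper_bound; first by split.
by exists t.
Qed.

Definition E (e : V) := 1 - lam * vdot (grad S e) e.

Lemma good_rel {e} : XI e -> E e != 0 -> grad S e = (L (T e) e)^-1 *: T e.
Proof.
move=> he hE.
have hL : L (T e) e = (E e)^-1.
  rewrite /L /lgrad -/(E e) vdotZl.
  apply: (@mulfI _ (E e)) => //.
  rewrite mulrDr mulr1 divff // /E; field => //.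
by rewrite hL invrK /lgrad -/(E e) scalerA divff // scale1r.
Qed.

Lemma bad_T {e} : E e = 0 -> T e = 0.
Proof. by move=> hE; rewrite /lgrad -/(E e) hE invr0 scale0r. Qed.

Definition g (e : V) := P (T e) + S e - lam^-1 * ln (L (T e) e).

Lemma g_ge0 {e} : XI e -> 0 <= g e.
Proof.
move=> he; have [ht _] := TG he.
have := sup_bound he ht (LTpos he).
by rewrite /g => H; rewrite subr_ge0 -lerBlDl.
Qed.

Lemma seg_in a b s : XI a -> XI b -> 0 <= s <= 1 -> XI (a + s *: (b - a)).
Proof.
move=> ha hb hs.
have -> : a + s *: (b - a) = s *: b + (1 - s) *: a.
  by rewrite scalerBr scalerBl scale1r addrC -!addrA [- _ + _]addrC.
exact: HXi_conv.
Qed.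


Lemma h_deriv {a v : V} {s : R} : XI (a + s *: v) ->
  exists D, is_derive s 1 (fun t => g (a + t *: v)) D /\
            (E (a + s *: v) != 0 -> D = 0).
Proof.
move=> he.
set e := (fun t : R => a + t *: v).
have he' : XI (e s) by [].
have [hT hGT] := TG he'.
have dl : differentiable e s := differentiable_line a v s.
have dTe : differentiable (T \o e) s.
  exact: differentiable_comp dl (Hdiffeo2 _ he').
have d1 := is_derive_comp_grad dTe (Hphi_diff _ hT).
have d2 := is_derive_comp_grad dl (Hpsi_diff _ he').
rewrite derive_line in d2.
have d3 := is_derive_vdot dTe dl.
rewrite derive_line in d3.
set Lf := (fun t => 1 + lam * vdot ((T \o e) t) (e t)).
have d4 : is_derive s 1 Lf (lam * (vdot ('D_1 (T \o e) s) (e s) + vdot (T (e s)) v)).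
  have := is_deriveD (is_derive_cst (1:R) s 1) (is_deriveZ lam d3).
  by rewrite add0r.
have hLpos : 0 < Lf s by exact: (LTpos he').
have d5 := is_derive1_comp (is_derive1_ln hLpos) d4.
have d6 := is_deriveB (is_deriveD d1 d2) (is_deriveZ lam^-1 d5).
eexists; split.
  have -> : (fun t => g (a + t *: v)) =
    (P \o (T \o e)) + (S \o e) - lam^-1 \*: ((@ln R) \o Lf).
    by apply: funext => t.
  exact: d6.
move=> hE.
have hgs := good_rel he' hE.
have hgp := (F3 hT).2.
rewrite hGT in hgp.
rewrite hgp hgs.
have -> : Lf s = L (T (e s)) (e s) by [].
have hL0 : L (T (e s)) (e s) != 0 by rewrite gt_eqF // LTpos.
move: hL0.
set te := T (e s).
set LL := L te (e s).
move=> hL0.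
rewrite !vdotZl /GRing.scale /= (vdotC (e s)).
field.
by rewrite -/(E (e s)) hE hL0 lam_neq0.
Qed.


Lemma const_seg (a v : V) (x y : R) : x < y ->
  (forall s, x <= s -> s <= y -> XI (a + s *: v)) ->
  (forall s, x < s -> s < y -> E (a + s *: v) != 0) ->
  g (a + x *: v) = g (a + y *: v).
Proof.
move=> xy hX hE.
set f := fun t => g (a + t *: v).
have fd : forall s, s \in `]x, y[ -> is_derive s 1 f 0.
  move=> s; rewrite in_itv /= => /andP[h1 h2].
  have [D [hD1 hD2]] := h_deriv (hX s (ltW h1) (ltW h2)).
  by rewrite -(hD2 (hE s h1 h2)).
have fc : {within `[x, y], continuous f}.
  apply: continuous_in_subspaceT => s; rewrite inE /= in_itv /= => /andP[hs1 hs2].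
  have [D [hD _]] := h_deriv (hX s hs1 hs2).
  exact/differentiable_continuous/derivable1_diffP/(ex_derive (is_derive:=hD)).
have [c _ hc] := MVT xy fd fc.
by move: hc; rewrite mul0r => /eqP; rewrite subr_eq0 => /eqP.
Qed.


Lemma seg_inj (a v : V) s s0 : v != 0 ->
  XI (a + s *: v) -> XI (a + s0 *: v) -> E (a + s *: v) = 0 -> E (a + s0 *: v) = 0 ->
  s = s0.
Proof.
move=> v0 hs hs0 e1 e2.
have := (TG hs).2; have := (TG hs0).2.
rewrite (bad_T e1) (bad_T e2) => E1 E2.
have : a + s *: v = a + s0 *: v by rewrite -E1 -E2.
move=> /addrI /eqP.
rewrite -subr_eq0 -scalerBl scaler_eq0 (negbTE v0) orbF subr_eq0.
by move/eqP.
Qed.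

Lemma g_const a b : XI a -> XI b -> g a = g b.
Proof.
move=> ha hb.
have [->|ab] := eqVneq a b; first by [].
set v := b - a.
have v0 : v != 0 by rewrite subr_eq0 eq_sym.
have ea : a = a + 0 *: v by rewrite scale0r addr0.
have eb : b = a + 1 *: v by rewrite scale1r /v addrC subrK.
rewrite {1}ea {1}eb.
have hX : forall s, 0 <= s -> s <= 1 -> XI (a + s *: v).
  by move=> s h1 h2; apply: seg_in => //; rewrite h1 h2.
have [[s0 [h1 h2 h3]]|nob] :=
  pselect (exists s0, [/\ 0 < s0, s0 < 1 & E (a + s0 *: v) = 0]).
  have hs0 : XI (a + s0 *: v) by apply: hX; [exact: ltW | exact: ltW].
  have hE : forall s, 0 <= s -> s <= 1 -> s != s0 -> E (a + s *: v) != 0.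
    move=> s k1 k2 ss0; apply/eqP => k3; move/eqP: ss0; apply.
    exact: seg_inj v0 (hX s k1 k2) hs0 k3 h3.
  rewrite (@const_seg a v 0 s0) //; last first.
  - move=> s k1 k2; apply: hE; [exact: ltW | exact: ltW (lt_trans k2 h2) | by rewrite lt_eqF].
  - by move=> s k1 k2; apply: hX => //; exact: le_trans k2 (ltW h2).
  apply: (@const_seg a v s0 1) => //.
  - by move=> s k1 k2; apply: hX => //; exact: le_trans (ltW h1) k1.
  - move=> s k1 k2; apply: hE; [exact: ltW (lt_trans h1 k1) | exact: ltW | by rewrite gt_eqF].
apply: (@const_seg a v 0 1 ltr01 hX).
move=> s k1 k2; apply/eqP => k3; apply: nob; exists s; split => //.
Qed.


Lemma at_right_of_dnbhs {f : R -> R} {x l : R} : f y @[y --> x^'] --> l -> f y @[y --> x^'+] --> l.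
Proof.
move=> cvfx A /cvfx /nbhs_ballP [_ /posnumP[e] xe_A].
by exists e%:num => //= y xe_y /gt_eqF/negbT/xe_A; exact.
Qed.

Lemma lam_inv_lt0 : lam^-1 < 0. Proof. by rewrite invr_lt0. Qed.

Lemma K_le x1 x2 L1 L2 : 0 < L1 -> 0 < L2 ->
  expR (lam * x2) / L2 <= expR (lam * x1) / L1 ->
  x1 - lam^-1 * ln L1 <= x2 - lam^-1 * ln L2.
Proof.
move=> h1 h2 hle.
have : ln (expR (lam * x2) / L2) <= ln (expR (lam * x1) / L1).
  by rewrite ler_ln // posrE divr_gt0 // expR_gt0.
rewrite !ln_div ?posrE ?expR_gt0 // !expRK => hl.
rewrite -(ler_nM2l lam_inv_lt0) in hl.
have e1 : forall x L0, lam^-1 * (lam * x - ln L0) = x - lam^-1 * ln L0.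
  by move=> x L0; rewrite mulrBr mulrA mulVf ?lam_neq0 // mul1r.
by rewrite -!e1.
Qed.

Lemma K_lt x1 x2 L1 L2 : 0 < L1 -> 0 < L2 ->
  expR (lam * x2) / L2 < expR (lam * x1) / L1 ->
  x1 - lam^-1 * ln L1 < x2 - lam^-1 * ln L2.
Proof.
move=> h1 h2 hle.
have : ln (expR (lam * x2) / L2) < ln (expR (lam * x1) / L1).
  by rewrite ltr_ln // posrE divr_gt0 // expR_gt0.
rewrite !ln_div ?posrE ?expR_gt0 // !expRK => hl.
rewrite -(ltr_nM2l lam_inv_lt0) in hl.
have e1 : forall x L0, lam^-1 * (lam * x - ln L0) = x - lam^-1 * ln L0.
  by move=> x L0; rewrite mulrBr mulrA mulVf ?lam_neq0 // mul1r.
by rewrite -!e1.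
Qed.

Lemma Q_concave {a b : V} {u} : XI a -> XI b -> 0 < u < 1 ->
  u * expR (lam * S b) + (1 - u) * expR (lam * S a) <=
  expR (lam * S (u *: b + (1 - u) *: a)).
Proof.
move=> ha hb hu.
have [->|ab] := eqVneq b a.
  have -> : u *: a + (1 - u) *: a = a by rewrite -scalerDl addrC subrK scale1r.
  by rewrite -mulrDl addrC subrK mul1r.
have := Hpsi_sconv b a hb ha ab u hu.
set Qm := expR (lam * S (u *: b + (1 - u) *: a)).
set Qb := expR (lam * S b); set Qa := expR (lam * S a).
move=> h.
have h' : lam^-1 * (Qm - 1) < lam^-1 * (u * Qb + (1 - u) * Qa - 1).
  have -> : lam^-1 * (u * Qb + (1 - u) * Qa - 1) =
    u * (lam^-1 * (Qb - 1)) + (1 - u) * (lam^-1 * (Qa - 1)) by ring.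
  exact: h.
rewrite (ltr_nM2l lam_inv_lt0) in h'.
apply: ltW; lra.
Qed.


Lemma FO t e : Th t -> E (G t) != 0 -> XI e -> 0 < L t e ->
  S (G t) - lam^-1 * ln (L t (G t)) <= S e - lam^-1 * ln (L t e).
Proof.
move=> ht hE he hLe.
have [ha hTa] := GT ht.
have hLa : 0 < L t (G t) := (F3 ht).1.
have hgr : grad S (G t) = (L t (G t))^-1 *: t by rewrite (good_rel ha hE) hTa.
move: ha hTa hE hLa hgr.
set a := G t => ha hTa hE hLa hgr.
set v := e - a.
set Q := fun u : R => expR (lam * S (a + u *: v)).
have hQ0 : Q 0 = expR (lam * S a) by rewrite /Q scale0r addr0.
have hQ1 : Q 1 = expR (lam * S e) by rewrite /Q scale1r /v addrC subrK.
have chord : forall u, 0 < u < 1 -> u * (Q 1 - Q 0) <= Q u - Q 0.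
  move=> u hu; rewrite hQ0 hQ1.
  have := Q_concave ha he hu.
  have -> : u *: e + (1 - u) *: a = a + u *: v.
    by rewrite /v scalerBr scalerBl scale1r addrCA addrC -addrA [- _ + _]addrC.
  rewrite -/(Q u) => h.
  have -> : u * (expR (lam * S e) - expR (lam * S a)) =
    u * expR (lam * S e) + (1 - u) * expR (lam * S a) - expR (lam * S a) by ring.
  by rewrite lerD2r.
have hda : differentiable S (a + 0 *: v) by rewrite scale0r addr0; exact: Hpsi_diff.
have d1 := is_derive_comp_grad (differentiable_line a v 0) hda.
rewrite derive_line scale0r addr0 hgr vdotZl in d1.
have d2 := is_deriveZ lam d1.
have d3 := is_derive1_comp (is_derive_expR _) d2.
have dQ : is_derive (0:R) (1:R) Q (expR (lam * S (a + 0 *: v)) *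
                             (lam * ((L t a)^-1 * vdot t v))) := d3.
have cv0 := @ex_derive _ _ _ _ _ _ _ dQ.
have cv : (fun h : R => h^-1 *: ((Q \o shift 0) (h *: 1) - Q 0)) @ 0^' --> 'D_1 Q 0.
  exact: cv0.
clearbody Q.
have key : Q 1 - Q 0 <= 'D_1 Q 0.
  have cvr := at_right_of_dnbhs cv.
  apply: (cvgr_to_ge cvr).
  near=> h.
  have h0 : 0 < h by near: h; exact: nbhs_right_gt.
  have h1 : h < 1 by near: h; exact: nbhs_right_lt ltr01.
  have -> : (Q \o shift 0) (h *: 1) = Q h.
    by rewrite /comp; congr Q; rewrite [shift _ _]addr0 [h *: 1]mulr1.
  rewrite [_ *: _]/(h^-1 * _).
  rewrite ler_pdivlMl; last exact: h0.
  by apply: chord; rewrite h0 h1.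
rewrite (@derive_val _ _ _ _ _ _ _ dQ) scale0r addr0 -hQ0 in key.
apply: (@K_le _ _ _ _ hLa hLe).
have hLe' : L t e = L t a + lam * vdot t v by rewrite /L /v vdotBr; ring.
rewrite -hQ0 -hQ1.
have hQa : 0 < Q 0 by rewrite hQ0 expR_gt0.
rewrite ler_pdivrMr // mulrAC ler_pdivlMr //.
rewrite hLe'.
have : Q 1 <= Q 0 + Q 0 * (lam * ((L t a)^-1 * vdot t v)) by rewrite -lerBlDl.
move=> hh.
have e2 : (Q 0 + Q 0 * (lam * ((L t a)^-1 * vdot t v))) * L t a =
   Q 0 * (L t a + lam * vdot t v).
  by field; rewrite gt_eqF.
rewrite -e2; apply: ler_wpM2r => //; exact: ltW.
Unshelve. all: by end_near.
Qed.


Lemma g_zero e : XI e -> g e = 0.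
Proof.
move=> he.
pose es := if pselect (Th 0) is left _ then G 0 else e.
have hes : XI es.
  by rewrite /es; case: pselect => // h0; exact: (GT h0).1.
have gc : forall e', XI e' -> g e' = g es by move=> e' h'; exact: g_const.
suff : S es <= S es - g es.
  move=> h; apply/eqP; rewrite eq_le g_ge0 // andbT.
  rewrite (gc e he); lra.
have [ub ne] := Hpsi_fin _ hes.
apply: ge_sup => // y [t [ht hLt] <-].
have [hGt hTG] := GT ht.
have hgt := gc _ hGt.
rewrite [g (G t)]/g hTG in hgt.
have hP : P t = g es - S (G t) + lam^-1 * ln (L t (G t)) by rewrite -hgt; ring.
rewrite hP.
suff : S (G t) - lam^-1 * ln (L t (G t)) <= S es - lam^-1 * ln (L t es) by lra.
have [hE|hE] := eqVneq (E (G t)) 0; last exact: FO.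
have t0 : t = 0 by rewrite -hTG; exact: bad_T.
subst t.
have -> : es = G 0 by rewrite /es; case: pselect.
by [].
Qed.


Lemma Q_sconcave {a b : V} {u} : XI a -> XI b -> b != a -> 0 < u < 1 ->
  u * expR (lam * S b) + (1 - u) * expR (lam * S a) <
  expR (lam * S (u *: b + (1 - u) *: a)).
Proof.
move=> ha hb ab hu.
have := Hpsi_sconv b a hb ha ab u hu.
set Qm := expR (lam * S (u *: b + (1 - u) *: a)).
set Qb := expR (lam * S b); set Qa := expR (lam * S a).
move=> h.
have h' : lam^-1 * (Qm - 1) < lam^-1 * (u * Qb + (1 - u) * Qa - 1).
  have -> : lam^-1 * (u * Qb + (1 - u) * Qa - 1) =
    u * (lam^-1 * (Qb - 1)) + (1 - u) * (lam^-1 * (Qa - 1)) by ring.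
  exact: h.
rewrite (ltr_nM2l lam_inv_lt0) in h'.
lra.
Qed.

Lemma L_comb t (a b : V) u : L t (u *: b + (1 - u) *: a) = u * L t b + (1 - u) * L t a.
Proof. rewrite /L vdotDr !vdotZr; ring. Qed.

Lemma strict_step th b : Th th -> XI b -> G th != b -> 0 < L th b ->
  lam^-1 * ln (L th b) - P th < S b.
Proof.
move=> ht hb ab hLb.
have [ha hTa] := GT ht.
have hLa : 0 < L th (G th) := (F3 ht).1.
have g0 := g_zero _ ha.
rewrite /g hTa in g0.
move: ha hTa hLa g0 ab.
set a := G th => ha hTa hLa g0 ab.
have hP : P th = lam^-1 * ln (L th a) - S a by rewrite -[P th]subr0 -g0; ring.
rewrite hP.
suff : S a - lam^-1 * ln (L th a) < S b - lam^-1 * ln (L th b) by lra.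
set Qa := expR (lam * S a); set Qb := expR (lam * S b).
have [hlt|hge] := ltP (Qb / L th b) (Qa / L th a).
  exact: (@K_lt _ _ _ _ hLa hLb).
exfalso.
pose u : R := 2^-1.
have hu : 0 < u < 1 by rewrite /u invr_gt0 invf_lt1 ?ltr0n ?ltr1n.
set m := u *: b + (1 - u) *: a.
have hm : XI m by apply: HXi_conv => //; rewrite ltW ?(andP hu).1 ?ltW ?(andP hu).2.
have hLm : L th m = u * L th b + (1 - u) * L th a by exact: L_comb.
have hLm0 : 0 < L th m.
  rewrite hLm; move/andP: hu => [u0 u1].
  by apply: ltr_pwDl; [apply: mulr_gt0 | apply: mulr_ge0; [lra | exact: ltW]].
have hsup := sup_bound hm ht hLm0.
rewrite hP in hsup.
have hKam : S a - lam^-1 * ln (L th a) <= S m - lam^-1 * ln (L th m) by lra.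
have ba : b != a by rewrite eq_sym.
have hQm := Q_sconcave ha hb ba hu.
rewrite -/Qa -/Qb -/m in hQm.
have hlt : Qa / L th a < expR (lam * S m) / L th m.
  have qa0 : 0 < Qa by exact: expR_gt0.
  have qb0 : 0 < Qb by exact: expR_gt0.
  rewrite ltr_pdivrMr // mulrAC ltr_pdivlMr //.
  rewrite ler_pdivrMr // mulrAC ler_pdivlMr // in hge.
  rewrite hLm.
  move/andP: hu => [u0 u1].
  rewrite /u in u0 u1 hQm *.
  nra.
have := @K_lt _ _ _ _ hLm0 hLa hlt.
lra.
Qed.


Lemma pos_data (x : X) t :
  (forall x t t', Th t -> Th t' -> 0 < pdens nu F lam x t -> 0 < pdens nu F lam x t') ->
  Supp nu F lam x -> Th t -> 0 < L t (F x).
Proof.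
move=> Hc [t0 ht0 hp0] ht.
have := Hc x t0 t ht0 ht hp0.
rewrite /pdens /lam_kernel.
rewrite pmulr_lgt0 ?expR_gt0 //.
rewrite /L; case: (leP (1 + lam * vdot t (F x)) 0) => h //.
by rewrite powR0 ?invr_eq0 ?lam_neq0 // ltxx.
Qed.

Lemma conv_comb n (w : 'I_n.+1 -> R) (y : 'I_n.+1 -> V) :
  (forall i, 0 < w i) -> \sum_i w i = 1 -> (forall i, XI (y i)) ->
  XI (\sum_i w i *: y i).
Proof.
elim: n w y => [|n IH] w y wpos wsum hy.
  by rewrite big_ord1; move: wsum; rewrite big_ord1 => ->; rewrite scale1r.
rewrite big_ord_recr /=.
move: wsum; rewrite big_ord_recr /= => wsum.
set W := \sum_(i < n.+1) w (widen_ord (leqnSn n.+1) i) in wsum *.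
have W0 : 0 < W.
  rewrite /W big_ord_recl /=; apply: ltr_pwDl; first exact: wpos.
  by apply: sumr_ge0 => i _; exact: ltW.
have hlast : w ord_max = 1 - W by rewrite -wsum addrAC subrr add0r.
have W1 : W <= 1 by have := wpos ord_max; rewrite hlast; lra.
have IH' := IH (fun i => w (widen_ord (leqnSn n.+1) i) / W)
                 (fun i => y (widen_ord (leqnSn n.+1) i)).
have hin : XI (\sum_(i < n.+1) (w (widen_ord (leqnSn n.+1) i) / W) *:
                 y (widen_ord (leqnSn n.+1) i)).
  apply: IH' => //.
  - by move=> i; apply: divr_gt0.
  - by rewrite -mulr_suml -/W divff // gt_eqF.
have hW : 0 <= W <= 1 by rewrite W1 ltW.
have e3 : forall i, W *: ((w (widen_ord (leqnSn n.+1) i) / W) *: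
    y (widen_ord (leqnSn n.+1) i)) = w (widen_ord (leqnSn n.+1) i) *: y (widen_ord (leqnSn n.+1) i).
  by move=> i; rewrite scalerA mulrC -mulrA mulVf ?gt_eqF // mulr1.
have := HXi_conv _ _ hin (hy ord_max) W hW.
rewrite scaler_sumr (eq_bigr _ (fun i _ => e3 i)).
by rewrite hlast.
Qed.

Lemma sum_ln_le n (r : 'I_n -> R) : (0 < n)%N -> (forall i, 0 < r i) ->
  \sum_i ln (r i) <= n%:R * ln ((\sum_i r i) / n%:R).
Proof.
move=> n0 rpos.
set A := (\sum_i r i) / n%:R.
have nR0 : 0 < n%:R :> R by rewrite ltr0n.
have A0 : 0 < A.
  apply: divr_gt0 => //.
  case: n n0 r rpos {A nR0} => // n _ r rpos.
  rewrite big_ord_recl; apply: ltr_pwDl; first exact: rpos.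
  by apply: sumr_ge0 => i _; exact: ltW.
have h : forall i, ln (r i) - ln A <= r i / A - 1.
  move=> i; rewrite -ln_div ?posrE //.
  have := @le_ln1Dx R (r i / A - 1).
  rewrite [1 + _]addrC subrK; apply.
  by rewrite ltrBrDl subrr divr_gt0.
have key : \sum_i (ln (r i) - ln A) <= 0.
  apply: le_trans (ler_sum _ (fun i _ => h i)) _.
  rewrite sumrB -mulr_suml sumr_const card_ord /A.
  have Sr0 : \sum_i r i != 0.
    apply/negP => /eqP h0; move: A0; rewrite /A h0 mul0r ltxx //.
  have nr0 : n%:R != 0 :> R by rewrite gt_eqF.
  have -> : (\sum_(i < n) r i) / ((\sum_i r i) / n%:R) = n%:R.
    by field; rewrite Sr0 nr0.
  by rewrite subrr.
move: key; rewrite sumrB subr_le0 sumr_const card_ord mulr_natl.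
by [].
Qed.


Lemma sum_pos m (f : 'I_m -> R) : (0 < m)%N -> (forall i, 0 < f i) -> 0 < \sum_i f i.
Proof.
case: m f => // m f _ fp.
rewrite big_ord_recl; apply: ltr_pwDl; first exact: fp.
by apply: sumr_ge0 => i _; exact: ltW.
Qed.

Section Data.
Hypothesis Hsupp_common : forall x t t', Th t -> Th t' ->
     0 < pdens nu F lam x t -> 0 < pdens nu F lam x t'.
Hypothesis Hsupp_Xi : forall x, Supp nu F lam x -> XI (F x).
Variables (n : nat) (Hn : (0 < n)%N) (xs : 'I_n -> X)
  (Hxs : forall i, Supp nu F lam (xs i)).
Local Notation y := (fun i => F (xs i)).

Lemma L_wsum t (w : 'I_n -> R) : \sum_i w i = 1 ->
  L t (\sum_i w i *: y i) = \sum_i w i * L t (y i).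
Proof.
move=> ws; rewrite /L vdot_sumr.
under [RHS]eq_bigr do rewrite mulrDr mulr1.
by rewrite big_split /= ws mulr_sumr; congr (_ + _); apply: eq_bigr => i _; ring.
Qed.

Lemma weights_pos th : Th th ->
  (forall i, 0 < weight lam y th i) /\ \sum_i weight lam y th i = 1.
Proof.
move=> ht.
have cpos : forall i, 0 < L th (y i) by move=> i; exact: pos_data Hsupp_common (Hxs i) ht.
have Sc0 : 0 < \sum_i (1 + lam * vdot th (y i))^-1.
  case: n Hn xs Hxs cpos => // m _ xs' _ cpos.
  rewrite big_ord_recl; apply: ltr_pwDl; first by rewrite invr_gt0; exact: cpos.
  by apply: sumr_ge0 => i _; apply: ltW; rewrite invr_gt0; exact: cpos.
split.
  by move=> i; rewrite /weight divr_gt0 // invr_gt0; exact: cpos.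
by rewrite /weight -mulr_suml divff // gt_eqF.
Qed.

Lemma eta_in th : Th th -> XI (\sum_i weight lam y th i *: y i).
Proof.
move=> ht; have [wp ws] := weights_pos _ ht.
case: n Hn xs Hxs wp ws => // m _ xs' hxs' wp ws.
by apply: conv_comb => // i; apply: Hsupp_Xi.
Qed.

Lemma main_step th : Th th ->
  G th <> \sum_i weight lam y th i *: y i ->
  loglik nu F lam y (T (\sum_i weight lam y th i *: y i)) >
  loglik nu F lam y th.
Proof.
move=> ht hne.
have [wp ws] := weights_pos _ ht.
have heta := eta_in _ ht.
move: hne wp ws heta.
set w := weight lam y th.
set eta := \sum_i w i *: y i.
move=> hne wp ws heta.
have [ht' hGt'] := TG heta.
move: ht' hGt'.
set th' := T eta => ht' hGt'.
have c0 : forall i, 0 < L th (y i) by move=> i; exact: pos_data Hsupp_common (Hxs i) ht.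
have c1 : forall i, 0 < L th' (y i) by move=> i; exact: pos_data Hsupp_common (Hxs i) ht'.
set Sc := \sum_i (L th (y i))^-1.
have hw : forall i, w i = (L th (y i))^-1 / Sc by [].
have Sc0 : 0 < Sc.
  apply: sum_pos; first exact: Hn.
  by move=> i; rewrite invr_gt0.
have nR0 : 0 < n%:R :> R by rewrite ltr0n.
have hLeta : L th eta = n%:R / Sc.
  rewrite /eta (L_wsum _ _ ws).
  have e0 : forall i, w i * L th (y i) = Sc^-1.
    by move=> i; rewrite hw mulrAC (mulVf (lt0r_neq0 (c0 i))) mul1r.
  rewrite (eq_bigr _ (fun i _ => e0 i)).
  by rewrite sumr_const card_ord mulr_natl.
have hLeta' : L th' eta = (\sum_i L th' (y i) / L th (y i)) / Sc.
  rewrite /eta (L_wsum _ _ ws) mulr_suml.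
  by apply: eq_bigr => i _; rewrite hw; ring.
have hLe0 : 0 < L th eta by rewrite hLeta divr_gt0.
have hLe0' : 0 < L th' eta := LTpos heta.
have hratio : (\sum_i L th' (y i) / L th (y i)) / n%:R = L th' eta / L th eta.
  rewrite hLeta hLeta'; field.
  by rewrite !gt_eqF.
have hJ := @sum_ln_le n (fun i => L th' (y i) / L th (y i)) Hn (fun i => divr_gt0 (c1 i) (c0 i)).
rewrite hratio ln_div ?posrE in hJ; [|exact: hLe0'|exact: hLe0].
have hD : \sum_i ln (L th' (y i) / L th (y i)) =
   \sum_i ln (L th' (y i)) - \sum_i ln (L th (y i)).
  by rewrite -sumrB; apply: eq_bigr => i _; rewrite ln_div ?posrE.
rewrite hD in hJ.
have hll : forall t, loglik nu F lam y t =
    lam^-1 * \sum_i ln (L t (y i)) - n%:R * P t.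
  by move=> t; rewrite /loglik sumrB mulr_sumr sumr_const card_ord mulr_natl.
rewrite !hll.
have g0 := g_zero _ heta.
rewrite /g -/th' in g0.
have hst := strict_step _ _ ht heta (introN eqP hne) hLe0.
set A' := \sum_i ln (L th' (y i)) in hJ *.
set A := \sum_i ln (L th (y i)) in hJ *.
set l' := ln (L th' eta) in hJ g0 *.
set l := ln (L th eta) in hJ hst *.
have hk : lam^-1 * (A' - A) >= lam^-1 * (n%:R * (l' - l)).
  by rewrite (ler_nM2l lam_inv_lt0).
have hpos : 0 < n%:R * (S eta - (lam^-1 * l - P th)).
  by apply: mulr_gt0; [exact: nR0 | rewrite subr_gt0].
have e2 : P th' = lam^-1 * l' - S eta.
  by rewrite -[LHS]subr0 -{1}g0; ring.
rewrite e2 -subr_gt0.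
have -> : lam^-1 * A' - n%:R * (lam^-1 * l' - S eta) - (lam^-1 * A - n%:R * P th) =
  (lam^-1 * (A' - A) - lam^-1 * (n%:R * (l' - l))) +
  n%:R * (S eta - (lam^-1 * l - P th)) by ring.
apply: ltr_wpDl; last exact: hpos.
by rewrite subr_ge0.
Qed.

Lemma step_Th th : Th th -> Th (T (\sum_i weight lam y th i *: y i)).
Proof. by move=> ht; exact: (TG (eta_in _ ht)).1. Qed.

End Data.

End Main.

Theorem theorem1 (R : realType) (d : nat)
  (dX : measure_display) (X : measurableType dX)
  (nu : {measure set X -> \bar R}) (F : X -> 'rV[R]_d) (lam : R)
  (* standing assumptions *)
  (Hlam : lam < 0)
  (HFmeas : forall i : 'I_d, measurable_fun setT (fun x => F x ord0 i))
  (Hphi_diff : forall t, Theta nu F lam t -> differentiable (phi nu F lam) t)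
  (Hphi_den : forall t, Theta nu F lam t ->
     0 < 1 - lam * vdot (grad (phi nu F lam) t) t)
  (Hpsi_fin : forall e, Xi nu F lam e -> has_ubound (psi_set nu F lam e)
                                      /\ psi_set nu F lam e !=set0)
  (Hpsi_diff : forall e, Xi nu F lam e -> differentiable (psi nu F lam) e)
  (Hpsi_sconv : strictly_convex_on (Xi nu F lam)
     (fun e => lam^-1 * (expR (lam * psi nu F lam e) - 1)))
  (Hinv : forall t, Theta nu F lam t ->
     lgrad lam (psi nu F lam) (lgrad lam (phi nu F lam) t) = t)
  (Hdiffeo1 : forall t, Theta nu F lam t ->
     differentiable (lgrad lam (phi nu F lam)) t)
  (Hdiffeo2 : forall e, Xi nu F lam e ->
     differentiable (lgrad lam (psi nu F lam)) e)
  (HXi_conv : convex_set_on (Xi nu F lam))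
  (Hsupp_common : forall x t t', Theta nu F lam t -> Theta nu F lam t' ->
     0 < pdens nu F lam x t -> 0 < pdens nu F lam x t')
  (Hsupp_Xi : forall x, Supp nu F lam x -> Xi nu F lam (F x))
  (* data *)
  (n : nat) (Hn : (0 < n)%N) (xs : 'I_n -> X)
  (Hxs : forall i, Supp nu F lam (xs i))
  (* iteration *)
  (theta eta : nat -> 'rV[R]_d)
  (Htheta0 : Theta nu F lam (theta 0%N))
  (Heta0 : eta 0%N = lgrad lam (phi nu F lam) (theta 0%N))
  (Heta : forall k, eta k.+1 =
     \sum_(i < n) weight lam (fun i => F (xs i)) (theta k) i *: F (xs i))
  (Htheta : forall k, theta k.+1 = lgrad lam (psi nu F lam) (eta k.+1)) :
  forall k : nat,
    lgrad lam (phi nu F lam) (theta k) <>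
      \sum_(i < n) weight lam (fun i => F (xs i)) (theta k) i *: F (xs i) ->
    loglik nu F lam (fun i => F (xs i)) (theta k.+1) >
    loglik nu F lam (fun i => F (xs i)) (theta k).
Proof.
have hTh : forall k, Theta nu F lam (theta k).
  elim=> [|k IH]; first exact: Htheta0.
  rewrite Htheta Heta; eapply step_Th; eassumption.
move=> k hne.
rewrite Htheta Heta.
eapply main_step; try eassumption.
exact: hTh.
Qed.
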